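(* Let $F:\mathbb{R}^n\rightrightarrows\mathbb{R}^p$ be a nearly convex set-valued mapping and $\Theta\subset\mathbb{R}^p$ a nearly convex set such that $\operatorname{ri}(\operatorname{rge} F)\cap\operatorname{ri}\Theta\neq\emptyset$. Define $F_0(x)=\operatorname{ri} F(x)$ for $x\in\mathbb{R}^n$. Then $$\operatorname{ri}\big(F^{-1}(\Theta)\big)=\operatorname{ri}(\operatorname{dom} F)\cap F_0^{-1}(\operatorname{ri}\Theta),$$ i.e. $\operatorname{ri}(F^{-1}(\Theta))=\{x\in\operatorname{ri}(\operatorname{dom} F):\operatorname{ri}F(x)\cap\operatorname{ri}\Theta\neq\emptyset\}$.
   Context: A set $\Omega\subset\mathbb{R}^k$ is nearly convex if there is a convex set $C$ with $C\subset\Omega\subset\overline{C}$. For an arbitrary set $\Omega$, $\operatorname{ri}\Omega=\{a\in\Omega:\exists\delta>0,\ B(a;\delta)\cap\operatorname{aff}\Omega\subset\Omega\}$. For $F:\mathbb{R}^n\rightrightarrows\mathbb{R}^p$: $\operatorname{dom} F=\{x:F(x)\neq\emptyset\}$, $\operatorname{rge} F=\bigcup_x F(x)$, $\operatorname{gph} F=\{(x,y):y\in F(x)\}$; $F$ is nearly convex if $\operatorname{gph} F$ is nearly convex. For $\Theta\subset\mathbb{R}^p$, $F^{-1}(\Theta)=\{x\in\mathbb{R}^n:F(x)\cap\Theta\neq\emptyset\}$. *)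

(* Defs.v *)
From HB Require Import structures.
From mathcomp Require Import all_boot all_order all_algebra.
From mathcomp Require Import boolp classical_sets reals.
Set Implicit Arguments. Unset Strict Implicit. Unset Printing Implicit Defensive.
Import Order.TTheory GRing.Theory Num.Theory.
Local Open Scope classical_set_scope.
Local Open Scope ring_scope.

Section Defs.
Variable R : realType.

Definition eball (k : nat) (a : 'rV[R]_k) (d : R) : set 'rV[R]_k :=
  [set b | \sum_(i < k) (a ord0 i - b ord0 i) ^+ 2 < d ^+ 2].

Definition eclosure (k : nat) (A : set 'rV[R]_k) : set 'rV[R]_k :=
  [set x | forall e : R, 0 < e -> exists y, A y /\ eball x e y].

Definition convex_set (k : nat) (C : set 'rV[R]_k) : Prop :=
  forall x y (t : R), C x -> C y -> 0 <= t -> t <= 1 ->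
    C ((1 - t) *: x + t *: y).

Definition nearly_convex (k : nat) (O : set 'rV[R]_k) : Prop :=
  exists C : set 'rV[R]_k, convex_set C /\ C `<=` O /\ O `<=` eclosure C.

Definition aff (k : nat) (O : set 'rV[R]_k) : set 'rV[R]_k :=
  [set z | exists (m : nat) (v : 'I_m -> 'rV[R]_k) (l : 'I_m -> R),
     (forall i, O (v i)) /\ \sum_(i < m) l i = 1 /\ z = \sum_(i < m) l i *: v i].

Definition ri (k : nat) (O : set 'rV[R]_k) : set 'rV[R]_k :=
  [set a | O a /\ exists d : R, 0 < d /\ eball a d `&` aff O `<=` O].

Definition sv_dom (n p : nat) (F : 'rV[R]_n -> set 'rV[R]_p) : set 'rV[R]_n :=
  [set x | F x !=set0].
Definition sv_rge (n p : nat) (F : 'rV[R]_n -> set 'rV[R]_p) : set 'rV[R]_p :=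
  [set y | exists x, F x y].
Definition sv_gph (n p : nat) (F : 'rV[R]_n -> set 'rV[R]_p) : set 'rV[R]_(n + p) :=
  [set z | exists x y, F x y /\ z = row_mx x y].
Definition nearly_convex_sv (n p : nat) (F : 'rV[R]_n -> set 'rV[R]_p) : Prop :=
  nearly_convex (sv_gph F).
Definition sv_preimage (n p : nat) (F : 'rV[R]_n -> set 'rV[R]_p)
  (T : set 'rV[R]_p) : set 'rV[R]_n :=
  [set x | (F x `&` T) !=set0].

End Defs.

(* Main.v *)
Require Import Defs.
From HB Require Import structures.
From mathcomp Require Import all_boot all_order all_algebra.
From mathcomp Require Import boolp classical_sets reals.
From mathcomp Require Import ring lra.
Import Order.TTheory GRing.Theory Num.Theory.
Local Open Scope classical_set_scope.
Local Open Scope ring_scope.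
Set Implicit Arguments. Unset Strict Implicit. Unset Printing Implicit Defensive.



Section Aux.
Variable R : realType.
Implicit Types (k : nat).

Definition box k (a : 'rV[R]_k) (e : R) (b : 'rV[R]_k) : Prop :=
  forall i, `|a ord0 i - b ord0 i| < e.

Lemma sq_lt_abs (x d : R) : 0 < d -> x ^+ 2 < d ^+ 2 -> `|x| < d.
Proof. move=> hd h. rewrite ltr_norml. apply/andP; split; nra. Qed.

Lemma eball_box k (a b : 'rV[R]_k) d : 0 < d -> eball a d b -> box a d b.
Proof.
move=> hd; rewrite /eball /= => h i; apply: sq_lt_abs => //.
apply: le_lt_trans h; rewrite (bigD1 i) //= lerDl; apply: sumr_ge0 => j _.
exact: sqr_ge0.
Qed.

Lemma box_eball k (a b : 'rV[R]_k) d : 0 < d -> box a (d / k.+1%:R) b -> eball a d b.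
Proof.
move=> hd h; rewrite /eball /=.
have de : d = d / k.+1%:R * k.+1%:R by rewrite mulfVK // pnatr_eq0.
have he : 0 < d / k.+1%:R by rewrite divr_gt0 // ltr0n.
move: (d / k.+1%:R) he de h => e he de h.

apply: (@le_lt_trans _ _ (\sum_(i < k) e ^+ 2)).
  apply: ler_sum => i _.
  have := h i; rewrite ltr_norml => /andP [h1 h2].
  move: (a ord0 i - b ord0 i) h1 h2 => x h1 h2. nra.
rewrite sumr_const card_ord de -mulr_natr.
have hk : 0 <= k%:R :> R by rewrite ler0n.
rewrite -natr1. nra.
Qed.

Lemma box_sym k (a b : 'rV[R]_k) e : box a e b -> box b e a.
Proof. by move=> h i; rewrite distrC. Qed.

Lemma box_refl k (a : 'rV[R]_k) e : 0 < e -> box a e a.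
Proof. by move=> he i; rewrite subrr normr0. Qed.

Lemma box_mono k (a b : 'rV[R]_k) e e' : e <= e' -> box a e b -> box a e' b.
Proof. by move=> h hb i; apply: lt_le_trans (hb i) h. Qed.

Lemma ecl_box k (C : set 'rV[R]_k) x :
  eclosure C x <-> (forall e, 0 < e -> exists y, C y /\ box x e y).
Proof.
split.
  move=> h e he; have [y [Cy hy]] := h e he; exists y; split => //.
  exact: eball_box.
move=> h e he.
have he' : 0 < e / k.+1%:R by rewrite divr_gt0 // ltr0n.
have [y [Cy hy]] := h _ he'; exists y; split => //; exact: box_eball.
Qed.

Lemma ri_box k (O : set 'rV[R]_k) a :
  ri O a <-> (O a /\ exists e, 0 < e /\ forall b, box a e b -> aff O b -> O b).
Proof.
split.
  move=> [Oa [d [hd h]]]; split => //; exists (d / k.+1%:R); split.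
    by rewrite divr_gt0 // ltr0n.
  move=> b hb hab; apply: h; split => //; exact: box_eball.
move=> [Oa [e [he h]]]; split => //; exists e; split => //.
move=> b [hb hab]; apply: h => //; exact: eball_box.
Qed.

End Aux.


Section Lin.
Variable R : realType.
Implicit Types (k m : nat).

Definition affS k m (v0 : 'rV[R]_k) (W : 'M[R]_(m, k)) : set 'rV[R]_k :=
  [set z | (z - v0 <= W)%MS].

Lemma aff_sub_affS k m (O : set 'rV[R]_k) v0 (W : 'M[R]_(m, k)) :
  O `<=` affS v0 W -> aff O `<=` affS v0 W.
Proof.
move=> hO z [q [v [l [hv [hl hz]]]]]; rewrite /affS /=.
have -> : z - v0 = \sum_i l i *: (v i - v0).
  rewrite hz; symmetry; under eq_bigr do rewrite scalerBr.
  by rewrite sumrB -scaler_suml hl scale1r.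
apply: summx_sub => i _; apply: scalemx_sub; exact: hO.
Qed.

Lemma affS_sub_aff k m (O : set 'rV[R]_k) v0 (W : 'M[R]_(m, k)) :
  O v0 -> (forall i, O (v0 + row i W)) -> affS v0 W `<=` aff O.
Proof.
move=> h0 hr z; rewrite /affS /= => hz.
set x := (z - v0) *m pinvmx W.
have hx : x *m W = z - v0 by rewrite mulmxKpV.
exists m.+1.
exists (fun j => if unlift ord0 j is Some i then v0 + row i W else v0).
exists (fun j => if unlift ord0 j is Some i then x ord0 i else 1 - \sum_i x ord0 i).
split; first by move=> j; case: (unlift ord0 j).
rewrite !big_ord_recl !unlift_none.
have hl : forall i : 'I_m, unlift ord0 (lift ord0 i) = Some i := liftK ord0.
split.
  rewrite [X in _ + X = _](eq_bigr (fun i => x ord0 i)); last by move=> i _; rewrite hl.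
  by rewrite subrK.
rewrite [X in _ = _ + X](eq_bigr (fun i => x ord0 i *: v0 + x ord0 i *: row i W));
  last by move=> i _; rewrite hl scalerDr.
rewrite big_split /= -scaler_suml -mulmx_sum_row hx.
by rewrite addrA -scalerDl subrK scale1r addrC subrK.
Qed.

Lemma mul_bound k m (u : 'rV[R]_k) (M : 'M[R]_(k, m)) e j :
  (forall i, `|u ord0 i| <= e) -> `|(u *m M) ord0 j| <= e * \sum_i `|M i j|.
Proof.
move=> hu; rewrite mxE; apply: le_trans (ler_norm_sum _ _ _) _.
rewrite mulr_sumr; apply: ler_sum => i _; rewrite normrM.
by apply: ler_wpM2r => //; exact: hu.
Qed.

Lemma small_zero (x S : R) : 0 <= S -> (forall e, 0 < e -> `|x| <= e * S) -> x = 0.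
Proof.
move=> hS h; apply/eqP; apply: contraT => hx.
have hx' : 0 < `|x| by rewrite normr_gt0.
have := h (`|x| / (S + 1)) (divr_gt0 hx' (ltr_pwDr ltr01 hS)).
rewrite mulrAC ler_pdivlMr ?(ltr_pwDr ltr01 hS) //.
move: `|x| hx' => y hy; nra.
Qed.

Lemma affS_closed k m v0 (W : 'M[R]_(m, k)) z :
  (forall e, 0 < e -> exists y, affS v0 W y /\ box z e y) -> affS v0 W z.
Proof.
move=> h; rewrite /affS /= submxE; apply/eqP/rowP => j; rewrite [RHS]mxE.
set K := cokermx W.
apply: (@small_zero _ (\sum_i `|K i j|)); first by apply: sumr_ge0 => *.
move=> e he; have [y [hy hb]] := h e he.
move: hy; rewrite /affS /= submxE => /eqP hy.
have -> : (z - v0) *m K = (z - y) *m K.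
  have e1 : z - v0 = (z - y) + (y - v0) by rewrite addrA subrK.
  by rewrite e1 mulmxDl hy addr0.
apply: mul_bound => i; rewrite !mxE; apply: ltW; exact: hb.
Qed.

Lemma convex_comb k (C : set 'rV[R]_k) v0 : convex_set C -> C v0 ->
  forall m (p : 'I_m -> 'rV[R]_k) (x : 'I_m -> R),
  (forall j, C (p j)) -> (forall j, 0 <= x j) -> \sum_j x j <= 1 ->
  C (v0 + \sum_j x j *: (p j - v0)).
Proof.
move=> hC h0; elim=> [|m IH] p x hp hx hs.
  by rewrite big_ord0 addr0.
rewrite big_ord_recr /=; move: hs; rewrite big_ord_recr /= => hs.
have hs0 : 0 <= \sum_(i < m) x (widen_ord (leqnSn m) i) by apply: sumr_ge0.
have [hxm|hxm] := eqVneq (x ord_max) 1.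
  have hz : \sum_(i < m) x (widen_ord (leqnSn m) i) = 0.
    apply/eqP; rewrite eq_le hs0 andbT; move: hs; rewrite hxm; lra.
  have hz' : \sum_(i < m) x (widen_ord (leqnSn m) i) *: (p (widen_ord (leqnSn m) i) - v0) = 0.
    apply: big1 => i _.
    by rewrite (psumr_eq0P (fun i _ => hx (widen_ord (leqnSn m) i)) hz) // scale0r.
  by rewrite hz' add0r hxm scale1r addrC subrK.
have hlt : x ord_max < 1 by rewrite lt_neqAle hxm /=; move: hs; have := hx ord_max; lra.
set t := x ord_max.
have ht : 0 < 1 - t by rewrite subr_gt0.
pose q := v0 + \sum_(i < m) ((1 - t)^-1 * x (widen_ord (leqnSn m) i)) *: (p (widen_ord (leqnSn m) i) - v0).
have Cq : C q.
  apply: IH => //.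
    by move=> j; rewrite mulr_ge0 // invr_ge0 ltW.
  rewrite -mulr_sumr ler_pdivrMl // mulr1; move: hs; rewrite /t; lra.
have := hC q (p ord_max) t Cq (hp _) (hx _) (ltW hlt).
congr C; rewrite /q scalerDr.
have -> : (1 - t) *: \sum_(i < m) ((1 - t)^-1 * x (widen_ord (leqnSn m) i)) *: (p (widen_ord (leqnSn m) i) - v0)
  = \sum_(i < m) x (widen_ord (leqnSn m) i) *: (p (widen_ord (leqnSn m) i) - v0).
  rewrite scaler_sumr; apply: eq_bigr => i _.
  by rewrite scalerA mulrA mulfV ?gt_eqF // mul1r.
move: (\sum_(i < m) _) => S.
apply/rowP => j; rewrite !mxE /t; ring.
Qed.

End Lin.


Section Data.
Variable R : realType.
Implicit Types (k m : nat).

Lemma rank_col_new k m (W : 'M[R]_(m, k)) (u : 'rV[R]_k) :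
  row_free W -> ~ (u <= W)%MS -> row_free (col_mx W u).
Proof.
move=> hf hu.
have hu0 : u != 0 by apply/eqP => h; apply: hu; rewrite h sub0mx.
have h1 : \rank u = 1%N by rewrite rank_rV hu0.
have h2 : \rank (W :&: u)%MS = 0%N.
  have hle := mxrankS (capmxSr W u); rewrite h1 in hle.
  case: (\rank (W :&: u)%MS) hle (mxrank_leqif_eq (capmxSr W u)) => [//|[|//]] _ hq.
  exfalso; apply: hu; rewrite h1 in hq; have := hq.2.
  rewrite eqxx => /esym/eqmxP h3.
  by apply: submx_trans (capmxSl W u); rewrite -h3.
rewrite /row_free -(addsmxE W u).1.
have := mxrank_sum_cap W u; rewrite h2 h1 addn0 => ->.
by move: hf; rewrite /row_free => /eqP ->; rewrite addn1.
Qed.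

Lemma affine_data k (C : set 'rV[R]_k) v0 : convex_set C -> C v0 ->
  exists m (W : 'M[R]_(m, k)),
    row_free W /\ (forall i, C (v0 + row i W)) /\ C `<=` affS v0 W.
Proof.
move=> hC h0; apply: contrapT => H.
have step : forall q, exists m (W : 'M[R]_(m, k)),
    (q <= m)%N /\ row_free W /\ (forall i, C (v0 + row i W)).
  elim => [|q [m [W [hm [hf hr]]]]].
    exists 0%N, (0 : 'M_(0, k)); split => //; split; last by case.
    by rewrite /row_free mxrank0.
  have [c [Cc hc]] : exists c, C c /\ ~ (c - v0 <= W)%MS.
    apply: contrapT => H2; apply: H; exists m, W; split => //; split => // c Cc.
    apply: contrapT => H3; apply: H2; by exists c.
  exists (m + 1)%N, (col_mx W (c - v0)); split; first by rewrite addn1.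
  split; first exact: rank_col_new.
  move=> i; rewrite -(splitK i); case: (split i) => j /=.
    by rewrite rowKu.
  by rewrite rowKd row_id addrC subrK.
have [m [W [hm [hf _]]]] := step k.+1.
move: hf; rewrite /row_free => /eqP hr.
have := rank_leq_col W; rewrite hr => hmk.
by have := leq_trans hm hmk; rewrite ltnn.
Qed.

End Data.


Section RiEx.
Variable R : realType.
Implicit Types (k m : nat).

Lemma ri_exists k m (C : set 'rV[R]_k) v0 (W : 'M[R]_(m, k)) :
  convex_set C -> C v0 -> row_free W -> (forall i, C (v0 + row i W)) ->
  exists b, C b /\ exists e, 0 < e /\ forall z, box b e z -> affS v0 W z -> C z.
Proof.
move=> hC h0 hf hr.
pose M : R := m.+1%:R.
have hM : 0 < M by rewrite ltr0n.
pose w : R := M^-1.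
have hw : 0 < w by rewrite invr_gt0.
have hwM : w * M = 1 by rewrite mulVf ?gt_eqF.
have hMm : M = m%:R + 1 by rewrite /M -natr1.
have hm0 : 0 <= m%:R :> R by rewrite ler0n.
pose c : 'rV[R]_m := const_mx w.
pose b := v0 + c *m W.
pose P := pinvmx W.
pose S := \sum_j \sum_i `|P i j|.
have hS : 0 <= S by apply: sumr_ge0 => j _; apply: sumr_ge0.
have hcol : forall j, \sum_i `|P i j| <= S.
  move=> j; rewrite /S (bigD1 j) //= lerDl; apply: sumr_ge0 => j' _.
  by apply: sumr_ge0.
pose q := w * w.
pose e := q / (S + 1).
have hS1 : 0 < S + 1 by rewrite ltr_pwDr.
have he : 0 < e by rewrite divr_gt0 // mulr_gt0.
have heS : e * S <= q.
  rewrite /e mulrAC ler_pdivrMr // ler_wpM2l ?lerDl //.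
  by rewrite mulr_ge0 // ltW.
have key : forall z, box b e z -> affS v0 W z -> C z.
  move=> z hz; rewrite /affS /= => hzW.
  pose x := (z - v0) *m P.
  have hx : x *m W = z - v0 by rewrite mulmxKpV.
  have hxc : x = c + (z - b) *m P.
    rewrite /x /b.
    have -> : z - v0 = (z - (v0 + c *m W)) + c *m W by rewrite opprD addrA subrK.
    by rewrite mulmxDl mulmxKp // addrC.
  have hd : forall j, `|((z - b) *m P) ord0 j| <= q.
    move=> j; apply: le_trans (@mul_bound _ _ _ _ _ e _ _) _.
      move=> i; rewrite (_ : (z - b) ord0 i = z ord0 i - b ord0 i); last by rewrite !mxE.
      by apply: ltW; rewrite distrC; apply: hz.
    apply: le_trans heS; apply: ler_wpM2l; [exact: ltW | exact: hcol].
  have hxj : forall j, x ord0 j = w + ((z - b) *m P) ord0 j.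
    by move=> j; rewrite hxc !mxE.
  have -> : z = v0 + \sum_j x ord0 j *: ((v0 + row j W) - v0).
    under eq_bigr do rewrite addrC addKr.
    by rewrite -mulmx_sum_row hx addrC subrK.
  apply: convex_comb => //.
    move=> j; rewrite hxj; have := hd j; rewrite ler_norml => /andP [h1 h2].
    have hM1 : 1 <= M by rewrite hMm lerDr.
    have hw1 : w <= 1 by rewrite -hwM ler_peMr // ltW.
    have : q <= w by rewrite /q ler_piMr // ltW.
    lra.
  under eq_bigr do rewrite hxj.
  rewrite big_split /= sumr_const card_ord.
  apply: (@le_trans _ _ (w *+ m + q *+ m)).
    rewrite lerD2l.
    have hq : \sum_(j < m) ((z - b) *m P) ord0 j <= \sum_(j < m) q.
      apply: ler_sum => j _.
      by have := hd j; rewrite ler_norml => /andP [].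
    by rewrite sumr_const card_ord in hq.
  rewrite -[w *+ m]mulr_natr -[q *+ m]mulr_natr /q.
  have h1 : w * m%:R = 1 - w.
    by have := hwM; rewrite hMm mulrDr mulr1; lra.
  have -> : w * w * m%:R = w * (1 - w) by rewrite -h1; ring.
  have hww : 0 <= w * w by rewrite mulr_ge0 // ltW.
  rewrite h1 (_ : w * (1 - w) = w - w * w); last by ring.
  lra.
exists b; split; last by exists e.
apply: key; first exact: box_refl.
by rewrite /affS /= /b addrC addKr submxMl.
Qed.

End RiEx.


Section NC.
Variable R : realType.
Implicit Types (k m : nat).

Definition riA k (C A : set 'rV[R]_k) a :=
  C a /\ exists e, 0 < e /\ forall z, box a e z -> A z -> C z.

Lemma affS_comb k m v0 (W : 'M[R]_(m, k)) x y (al be : R) :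
  affS v0 W x -> affS v0 W y -> al + be = 1 -> affS v0 W (al *: x + be *: y).
Proof.
rewrite /affS /= => hx hy hab.
have -> : al *: x + be *: y - v0 = al *: (x - v0) + be *: (y - v0).
  apply/rowP => j; rewrite !mxE.
  have -> : be = 1 - al by rewrite -hab addrC addKr.
  ring.
by apply: addmx_sub; apply: scalemx_sub.
Qed.

Lemma real_lsp (t e1 Z Z' B B' A : R) : 0 < t -> t <= 1 -> 0 < e1 ->
  `|Z - Z'| < t * e1 / 2 -> `|B - B'| < t * e1 / 2 -> Z = (1 - t) * B + t * A ->
  `|A - t^-1 * (Z' - (1 - t) * B')| < e1.
Proof.
move=> ht ht1 he h1 h2 hZ.
have -> : A - t^-1 * (Z' - (1 - t) * B') = t^-1 * ((Z - Z') + (1 - t) * (B' - B)).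
  rewrite hZ; field; by rewrite gt_eqF.
rewrite normrM gtr0_norm ?invr_gt0 // mulrC ltr_pdivrMr //.
move: h1 h2; rewrite !ltr_norml => /andP [h1 h1'] /andP [h2 h2'].
apply/andP; split; nra.
Qed.

Lemma lsp_c k m (C : set 'rV[R]_k) v0 (W : 'M[R]_(m, k)) a b (t : R) :
  convex_set C -> C `<=` affS v0 W -> riA C (affS v0 W) a ->
  eclosure C b -> 0 < t -> t <= 1 ->
  riA C (affS v0 W) ((1 - t) *: b + t *: a).
Proof.
move=> hC hCA [Ca [e1 [he1 Ha]]] hb ht ht1.
have hbA : affS v0 W b.
  apply: affS_closed => e he; have [y [Cy hy]] := (ecl_box C b).1 hb e he.
  by exists y; split => //; apply: hCA.
pose e := t * e1 / 2.
have he : 0 < e by rewrite /e divr_gt0 // mulr_gt0.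
suff H : forall z', box ((1 - t) *: b + t *: a) e z' -> affS v0 W z' -> C z'.
  split; last by exists e.
  apply: H; first exact: box_refl.
  by apply: affS_comb => //; [apply: hCA | rewrite subrK].
move=> z' hz hz'.
have [b' [Cb' hb']] := (ecl_box C b).1 hb e he.
pose a' := t^-1 *: (z' - (1 - t) *: b').
have Aa' : affS v0 W a'.
  have -> : a' = t^-1 *: z' + (- ((1 - t) * t^-1)) *: b'.
    apply/rowP => j; rewrite !mxE; ring.
  apply: affS_comb => //; first exact: hCA.
  field; by rewrite gt_eqF.
have Ca' : C a'.
  apply: Ha => // i; rewrite /a' !mxE.
  apply: (@real_lsp t e1 (((1 - t) *: b + t *: a) ord0 i)) => //.
  all: try (by rewrite !mxE).
have := hC b' a' t Cb' Ca' (ltW ht) ht1.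
congr C; apply/rowP => j; rewrite /a' !mxE; field; by rewrite gt_eqF.
Qed.

Lemma nc_data k (O : set 'rV[R]_k) : nearly_convex O -> O !=set0 ->
  exists C v0 m (W : 'M[R]_(m, k)) c,
    [/\ convex_set C, C `<=` O, O `<=` eclosure C,
        aff O = affS v0 W & C `<=` affS v0 W /\ riA C (affS v0 W) c].
Proof.
move=> [C [hC [hCO hOC]]] [x Ox].
have [v0 [Cv0 _]] := hOC x Ox 1 ltr01.
have [m [W [hf [hr hCA]]]] := affine_data hC Cv0.
have [c [Cc [e [he Hc]]]] := ri_exists hC Cv0 hf hr.
exists C, v0, m, W, c; split => //.
- apply/seteqP; split.
    apply: aff_sub_affS => z Oz; apply: affS_closed => e' he'.
    have [y [Cy hy]] := (ecl_box C z).1 (hOC z Oz) e' he'.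
    by exists y; split => //; apply: hCA.
  by apply: affS_sub_aff => [|i]; apply: hCO.
- by split => //; split => //; exists e.
Qed.

Lemma small_step k (a c : 'rV[R]_k) e0 : 0 < e0 ->
  exists e, 0 < e /\ forall s, 0 < s -> s <= e -> box a e0 (a + s *: (a - c)).
Proof.
move=> he0.
pose N := \sum_i `|a ord0 i - c ord0 i|.
have hN : 0 <= N by apply: sumr_ge0.
have hN1 : 0 < N + 1 by rewrite ltr_pwDr.
exists (e0 / (N + 1)); split; first by rewrite divr_gt0.
move=> s hs hse i; rewrite !mxE.
rewrite (_ : a ord0 i - (a ord0 i + s * (a ord0 i - c ord0 i)) = - (s * (a ord0 i - c ord0 i))); last by ring.
rewrite normrN normrM gtr0_norm //.
have hi : `|a ord0 i - c ord0 i| <= N.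
  by rewrite /N (bigD1 i) //= lerDl; apply: sumr_ge0.
have hse' : s * (N + 1) <= e0 by rewrite -ler_pdivlMr.
move: `|_| hi (normr_ge0 (a ord0 i - c ord0 i)) => y hy hy0.
nra.
Qed.

Lemma aff2 k (O : set 'rV[R]_k) x y (al be : R) :
  O x -> O y -> al + be = 1 -> aff O (al *: x + be *: y).
Proof.
move=> Ox Oy hab.
exists 2%N, (fun i : 'I_2 => if val i == 0%N then x else y),
  (fun i : 'I_2 => if val i == 0%N then al else be).
split; first by move=> i; case: ifP.
by rewrite !big_ord_recr !big_ord0 /= !add0r.
Qed.

Lemma char_fwd k (O : set 'rV[R]_k) z : ri O z ->
  forall y, O y -> exists e, 0 < e /\ forall s, 0 < s -> s <= e -> O (z + s *: (z - y)).
Proof.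
move=> /ri_box [Oz [e0 [he0 H]]] y Oy.
have [e [he Hs]] := small_step z y he0.
exists e; split => // s hs hse; apply: H; first exact: Hs.
have -> : z + s *: (z - y) = (1 + s) *: z + (- s) *: y.
  by apply/rowP => j; rewrite !mxE; ring.
by apply: aff2 => //; ring.
Qed.

Lemma kkey k m (C : set 'rV[R]_k) v0 (W : 'M[R]_(m, k)) c z (s : R) :
  convex_set C -> C `<=` affS v0 W -> riA C (affS v0 W) c -> 0 < s ->
  eclosure C (z + s *: (z - c)) -> riA C (affS v0 W) z.
Proof.
move=> hC hCA hc hs hcl.
have hs1 : 0 < 1 + s by rewrite ltr_pwDl // ltW.
have := lsp_c hC hCA hc hcl (t := s / (1 + s)) _ _.
rewrite divr_gt0 // ler_pdivrMr // mul1r lerDr ltW //.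
move=> /(_ isT isT); congr riA.
apply/rowP => j; rewrite !mxE; field; by rewrite gt_eqF.
Qed.

Lemma ri_riA k (O C : set 'rV[R]_k) v0 m (W : 'M[R]_(m, k)) c :
  convex_set C -> C `<=` O -> O `<=` eclosure C -> aff O = affS v0 W ->
  C `<=` affS v0 W -> riA C (affS v0 W) c ->
  forall a, ri O a <-> riA C (affS v0 W) a.
Proof.
move=> hC hCO hOC hA hCA hc a; split.
  move=> hra; have := char_fwd hra (hCO _ hc.1).
  move=> [e [he H]]; apply: (kkey hC hCA hc he); apply: hOC; apply: H => //.
move=> [Ca [e [he H]]]; apply/ri_box; split; first exact: hCO.
exists e; split => // z hz; rewrite hA => hzA; apply: hCO; exact: H.
Qed.

End NC.


Section NC2.
Variable R : realType.
Implicit Types (k m : nat).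

Lemma char_bwd k (O : set 'rV[R]_k) z : nearly_convex O -> O z ->
  (forall y, O y -> exists s, 0 < s /\ O (z + s *: (z - y))) -> ri O z.
Proof.
move=> hO Oz Hext.
have [C [v0 [m [W [c [hC hCO hOC hA [hCA hc]]]]]]] := nc_data hO (ex_intro _ z Oz).
apply/(ri_riA hC hCO hOC hA hCA hc).
have [s [hs H]] := Hext c (hCO _ hc.1).
by apply: (kkey hC hCA hc hs); apply: hOC.
Qed.

Lemma ri_nonempty k (O : set 'rV[R]_k) : nearly_convex O -> O !=set0 -> ri O !=set0.
Proof.
move=> hO hne.
have [C [v0 [m [W [c [hC hCO hOC hA [hCA hc]]]]]]] := nc_data hO hne.
by exists c; apply/(ri_riA hC hCO hOC hA hCA hc).
Qed.

Lemma lsp_nc k (O : set 'rV[R]_k) a b (t : R) : nearly_convex O -> ri O a -> O b ->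
  0 < t -> t <= 1 -> ri O ((1 - t) *: b + t *: a).
Proof.
move=> hO ha Ob ht ht1.
have [C [v0 [m [W [c [hC hCO hOC hA [hCA hc]]]]]]] := nc_data hO (ex_intro _ b Ob).
have E := ri_riA hC hCO hOC hA hCA hc.
by apply/E; apply: lsp_c => //; [apply/E | apply: hOC].
Qed.

Lemma nc_core k (O : set 'rV[R]_k) : nearly_convex O ->
  exists C, [/\ convex_set C, C `<=` O, O `<=` eclosure C &
    forall a b (t : R), ri O a -> eclosure C b -> 0 < t -> t <= 1 ->
      C ((1 - t) *: b + t *: a)].
Proof.
move=> hO; have [hne|h0] := pselect (O !=set0).
  have [C [v0 [m [W [c [hC hCO hOC hA [hCA hc]]]]]]] := nc_data hO hne.
  have E := ri_riA hC hCO hOC hA hCA hc.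
  exists C; split => // a b t ha hb ht ht1.
  by have [] := lsp_c hC hCA ((E a).1 ha) hb ht ht1.
have [C [hC [hCO hOC]]] := hO.
exists C; split => // a b t [Oa _]; exfalso; apply: h0; by exists a.
Qed.

Lemma comb_id k (z w : 'rV[R]_k) (s : R) : 0 < s ->
  (1 - s / (1 + s)) *: (z + s *: (z - w)) + (s / (1 + s)) *: w = z.
Proof.
move=> hs; have hs1 : 1 + s != 0 by rewrite gt_eqF // ltr_pwDl // ltW.
apply/rowP => j; rewrite !mxE; field; exact: hs1.
Qed.

Lemma t_ok (s : R) : 0 < s -> 0 < s / (1 + s) /\ s / (1 + s) <= 1.
Proof.
move=> hs; have hs1 : 0 < 1 + s by rewrite ltr_pwDl // ltW.
split; first by rewrite divr_gt0.
by rewrite ler_pdivrMr // mul1r lerDr ltW.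
Qed.

Section Image.
Variables (k j : nat) (f : 'rV[R]_k -> 'rV[R]_j).
Hypothesis hlin : forall x y (al be : R), f (al *: x + be *: y) = al *: f x + be *: f y.
Hypothesis hbox : forall x y e, box x e y -> box (f x) e (f y).

Lemma f_step z w (s : R) : f (z + s *: (z - w)) = f z + s *: (f z - f w).
Proof.
have -> : z + s *: (z - w) = (1 + s) *: z + (- s) *: w.
  by apply/rowP => i; rewrite !mxE; ring.
by rewrite hlin; apply/rowP => i; rewrite !mxE; ring.
Qed.

Lemma nc_image (O : set 'rV[R]_k) : nearly_convex O -> nearly_convex (f @` O).
Proof.
move=> [C [hC [hCO hOC]]]; exists (f @` C); split; last split.
- move=> _ _ t [a Ca <-] [b Cb <-] ht0 ht1; exists ((1 - t) *: a + t *: b).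
    exact: hC.
  by rewrite hlin.
- by move=> _ [a Ca <-]; exists a => //; apply: hCO.
- move=> _ [a Oa <-]; apply/ecl_box => e he.
  have [y [Cy hy]] := (ecl_box C a).1 (hOC a Oa) e he.
  by exists (f y); split; [exists y | apply: hbox].
Qed.

Lemma ri_image (O : set 'rV[R]_k) : nearly_convex O -> ri (f @` O) = f @` (ri O).
Proof.
move=> hO; apply/seteqP; split.
  move=> u hu.
  have [a Oa _] := hu.1.
  have [w hw] := ri_nonempty hO (ex_intro _ a Oa).
  have [e [he H]] := char_fwd hu (ex_intro2 _ _ w hw.1 erefl).
  have [z1 Oz1 hz1] := H e he (lexx e).
  have [ht ht1] := t_ok he.
  exists ((1 - e / (1 + e)) *: z1 + (e / (1 + e)) *: w).
    exact: lsp_nc.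
  by rewrite hlin hz1 comb_id.
move=> _ [z hz <-]; apply: char_bwd; first exact: nc_image.
  by exists z => //; exact: hz.1.
move=> _ [y Oy <-].
have [e [he H]] := char_fwd hz Oy.
exists e; split => //; exists (z + e *: (z - y)); last exact: f_step.
exact: H.
Qed.

End Image.

End NC2.


Section Main.
Variable R : realType.
Variables (n p : nat) (F : 'rV[R]_n -> set 'rV[R]_p) (T : set 'rV[R]_p).
Hypothesis hF : nearly_convex (sv_gph F).
Hypothesis hT : nearly_convex T.
Hypothesis hq : (ri (sv_rge F) `&` ri T) !=set0.

Definition pl (z : 'rV[R]_(n + p)) : 'rV[R]_n := lsubmx z.
Definition pr (z : 'rV[R]_(n + p)) : 'rV[R]_p := rsubmx z.

Lemma hlinL x y (al be : R) : pl (al *: x + be *: y) = al *: pl x + be *: pl y.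
Proof. by apply/rowP => j; rewrite !mxE. Qed.
Lemma hlinR x y (al be : R) : pr (al *: x + be *: y) = al *: pr x + be *: pr y.
Proof. by apply/rowP => j; rewrite !mxE. Qed.
Lemma hboxL x y e : box x e y -> box (pl x) e (pl y).
Proof. by move=> h i; rewrite !mxE; apply: h. Qed.
Lemma hboxR x y e : box x e y -> box (pr x) e (pr y).
Proof. by move=> h i; rewrite !mxE; apply: h. Qed.

Lemma G_row x y : sv_gph F (row_mx x y) <-> F x y.
Proof.
split; last by move=> h; exists x, y.
by move=> [x' [y' [h e]]]; have [-> ->] := eq_row_mx e.
Qed.

Lemma G_split z : sv_gph F z -> z = row_mx (pl z) (pr z) /\ F (pl z) (pr z).
Proof.
move=> [x [y [h ->]]]; rewrite /pl /pr row_mxKl row_mxKr; by split.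
Qed.

Lemma dom_eq : sv_dom F = pl @` sv_gph F.
Proof.
apply/seteqP; split.
  move=> x [y Fxy]; exists (row_mx x y); first by apply/G_row.
  by rewrite /pl row_mxKl.
move=> _ [z Gz <-]; have [_ h] := G_split Gz; by exists (pr z).
Qed.

Lemma rge_eq : sv_rge F = pr @` sv_gph F.
Proof.
apply/seteqP; split.
  move=> y [x Fxy]; exists (row_mx x y); first by apply/G_row.
  by rewrite /pr row_mxKr.
move=> _ [z Gz <-]; have [_ h] := G_split Gz; by exists (pl z).
Qed.

Lemma S5 x y : ri (sv_gph F) (row_mx x y) <-> ri (sv_dom F) x /\ ri (F x) y.
Proof.
have fwd : forall x y, ri (sv_gph F) (row_mx x y) -> ri (sv_dom F) x /\ ri (F x) y.
  move=> {}x {}y h; split.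
    rewrite dom_eq (ri_image hlinL hboxL) //.
    by exists (row_mx x y) => //; rewrite /pl row_mxKl.
  have [Gxy [e [he H]]] := (ri_box _ _).1 h.
  apply/ri_box; split; first by apply/G_row.
  exists e; split => // y' hy' [q [v [l [hv [hl hy'e]]]]].
  apply/G_row; apply: H.
    move=> i; rewrite -(splitK i); case: (split i) => j /=.
      by rewrite !row_mxEl subrr normr0.
    by rewrite !row_mxEr; apply: hy'.
  exists q, (fun i => row_mx x (v i)), l; split; first by move=> i; apply/G_row.
  split => //; apply/rowP => i; rewrite summxE.
  rewrite -(splitK i); case: (split i) => j /=.
    rewrite row_mxEl.
    under eq_bigr do rewrite mxE row_mxEl.
    by rewrite -mulr_suml hl mul1r.
  rewrite row_mxEr hy'e summxE; apply: eq_bigr => r _.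
  by rewrite [LHS]mxE [RHS]mxE row_mxEr.
split; first exact: fwd.
move=> [hx hy].
move: hx; rewrite dom_eq (ri_image hlinL hboxL) // => -[z hz hzx].
have [ez Fz] := G_split hz.1.
move: ez Fz hz; rewrite hzx; set b := pr z => ez Fz hz.
rewrite ez in hz.
have [_ hb] := fwd _ _ hz.
have [e [he H]] := char_fwd hy Fz.
have Fy' := H e he (lexx e).
have [ht ht1] := t_ok he.
have := lsp_nc hF hz (b := row_mx x (y + e *: (y - b))) (proj2 (G_row _ _) Fy') ht ht1.
rewrite !scale_row_mx add_row_mx comb_id //.
by rewrite -scalerDl subrK scale1r.
Qed.

Definition P := [set z | sv_gph F z /\ T (pr z)].

Lemma S1 : exists w, ri (sv_gph F) w /\ ri T (pr w).
Proof.
have [y0 [hr hy0]] := hq.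
move: hr; rewrite rge_eq (ri_image hlinR hboxR) // => -[w hw hwy].
by exists w; rewrite hwy.
Qed.

Lemma S2 : nearly_convex P.
Proof.
have [CG [hCG hCGs hGcl hGl]] := nc_core hF.
have [CT [hCT hCTs hTcl hTl]] := nc_core hT.
have [w [hwG hwT]] := S1.
exists [set z | CG z /\ CT (pr z)]; split; last split.
- move=> a b t [CGa CTa] [CGb CTb] ht0 ht1; split; first exact: hCG.
  by rewrite hlinR; apply: hCT.
- by move=> z [a b]; split; [apply: hCGs | apply: hCTs].
move=> z [Gz Tz]; apply/ecl_box => e he.
have [e0 [he0 H]] := small_step z (z + (z - w)) he.
have [hs hs1] := t_ok he0.
set s := e0 / (1 + e0).
have hse : s <= e0.
  rewrite /s ler_pdivrMr ?ltr_pwDl ?ltW //; nra.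
have eq1 : z + s *: (z - (z + (z - w))) = (1 - s) *: z + s *: w.
  by apply/rowP => i; rewrite !mxE; ring.
exists ((1 - s) *: z + s *: w); split; last by rewrite -eq1; apply: H.
split; first by apply: hGl => //; apply: hGcl.
by rewrite hlinR; apply: hTl => //; apply: hTcl.
Qed.

Lemma S3 z : ri P z <-> P z /\ ri (sv_gph F) z /\ ri T (pr z).
Proof.
split.
  move=> hz; have [w [hwG hwT]] := S1.
  have Pw : P w by split; [exact: hwG.1 | exact: hwT.1].
  have [e [he H]] := char_fwd hz Pw.
  have [Gz' Tz'] := H e he (lexx e).
  have [ht ht1] := t_ok he.
  split; first exact: hz.1.
  split.
    rewrite -(comb_id z w he); exact: lsp_nc.
  rewrite -(comb_id (pr z) (pr w) he) -(f_step hlinR); exact: lsp_nc.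
move=> [Pz [hGz hTz]]; apply: char_bwd S2 Pz _ => y [Gy Ty].
have [e1 [he1 H1]] := char_fwd hGz Gy.
have [e2 [he2 H2]] := char_fwd hTz Ty.
have [s [hs [hs1 hs2]]] : exists s, 0 < s /\ s <= e1 /\ s <= e2.
  by case: (leP e1 e2) => h; [exists e1 | exists e2; split => //; split => //; apply: ltW].
exists s; split => //; split; first exact: H1.
by rewrite (f_step hlinR); apply: H2.
Qed.

Lemma S4 : sv_preimage F T = pl @` P.
Proof.
apply/seteqP; split.
  move=> x [y [Fxy Ty]]; exists (row_mx x y).
    by split; [apply/G_row | rewrite /pr row_mxKr].
  by rewrite /pl row_mxKl.
move=> _ [z [Gz Tz] <-]; have [_ h] := G_split Gz; by exists (pr z).
Qed.

Lemma main_eq : ri (sv_preimage F T) =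
  ri (sv_dom F) `&` sv_preimage (fun x => ri (F x)) (ri T).
Proof.
rewrite S4 (ri_image hlinL hboxL S2).
apply/seteqP; split.
  move=> _ [z hz <-]; have [Pz [hGz hTz]] := (S3 z).1 hz.
  have [ez _] := G_split Pz.1.
  rewrite ez in hGz; have [h1 h2] := (S5 _ _).1 hGz.
  by split => //; exists (pr z).
move=> x [hx [y [hy hyT]]].
have hG := (S5 x y).2 (conj hx hy).
exists (row_mx x y); last by rewrite /pl row_mxKl.
apply/S3; split; last by split => //; rewrite /pr row_mxKr.
by split; [exact: hG.1 | rewrite /pr row_mxKr; exact: hyT.1].
Qed.

End Main.

Theorem theorem3p3 (R : realType) (n p : nat)
  (F : 'rV[R]_n -> set 'rV[R]_p) (Theta : set 'rV[R]_p) :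
  nearly_convex_sv F -> nearly_convex Theta ->
  (ri (sv_rge F) `&` ri Theta) !=set0 ->
  ri (sv_preimage F Theta) =
  ri (sv_dom F) `&` sv_preimage (fun x => ri (F x)) (ri Theta).
Proof. move=> hF hT hq; exact: main_eq. Qed.
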